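(* Let $b\ge 2$. For every finite nonempty string $I$ of base-$b$ digits there exist infinitely many $b$-wMRH numbers whose base-$b$ representation contains $I$ as a contiguous substring.
   Context: Fix a base $b\ge 2$. $s_b(N)$ is the sum of the base-$b$ digits of $N$. For a positive integer $X$, its reversal $X^R$ is the integer whose base-$b$ representation is that of $X$ written in reverse order (leading zeros of the result are dropped). A positive integer $N$ is a $b$-wMRH number if there exists an integer $A\ge 0$ such that $N=(A+s_b(N))\cdot(A+s_b(N))^R$. *)

(* Defs.v *)
From mathcomp Require Import all_boot.
Set Implicit Arguments. Unset Strict Implicit. Unset Printing Implicit Defensive.

(* Base-b digits of n, least significant first (empty for n = 0).
   Fuel n suffices since b >= 2 makes n strictly decrease. *)
Fixpoint digits_le_fuel (fuel b n : nat) : seq nat :=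
  match fuel with
  | 0 => [::]
  | fuel'.+1 => if n == 0 then [::] else (n %% b) :: digits_le_fuel fuel' b (n %/ b)
  end.

Definition digits_le (b n : nat) : seq nat := digits_le_fuel n b n.

Definition digits (b n : nat) : seq nat := rev (digits_le b n).

Definition from_digits (b : nat) (s : seq nat) : nat := foldl (fun acc d => acc * b + d) 0 s.

Definition digsum (b n : nat) : nat := sumn (digits_le b n).

(* X^R: the integer whose base-b representation is that of X reversed
   (leading zeros of the result are dropped automatically by evaluation). *)
Definition rev_num (b x : nat) : nat := from_digits b (rev (digits b x)).

Definition wMRH (b N : nat) : Prop :=
  0 < N /\ exists A : nat, N = (A + digsum b N) * rev_num b (A + digsum b N).

(* Main.v *)
Require Import Defs.
From mathcomp Require Import all_boot.
From mathcomp Require Import zify.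

Section S.
Variable b : nat.
Hypothesis hb : 2 <= b.

Lemma fuel_irr f1 : forall f2 n, n <= f1 -> n <= f2 ->
  digits_le_fuel f1 b n = digits_le_fuel f2 b n.
Proof.
elim: f1 => [|f1 IH] [|f2] n /= h1 h2.
- by [].
- by have -> : n = 0 by lia.
- by have -> : n = 0 by lia.
- case: eqP => // /eqP n0; congr (_ :: _); apply: IH.
  + have := ltn_Pdiv hb (_ : 0 < n); lia.
  + have := ltn_Pdiv hb (_ : 0 < n); lia.
Qed.

Lemma digits_le_unfold n : 0 < n ->
  digits_le b n = n %% b :: digits_le b (n %/ b).
Proof.
case: n => // n _; rewrite /digits_le /=; congr (_ :: _).
have := ltn_Pdiv hb (ltn0Sn n).
by move=> h; apply: fuel_irr; lia.
Qed.

Lemma digits_le_step d x : d < b -> 0 < d + x * b ->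
  digits_le b (x * b + d) = d :: digits_le b x.
Proof.
move=> hd hp; rewrite digits_le_unfold; last by lia.
rewrite modnMDl modn_small // divnMDl; last by lia.
by rewrite divn_small // addn0.
Qed.

Lemma digits_le0 : digits_le b 0 = [::].
Proof. by []. Qed.

Definition vle (l : seq nat) := foldr (fun d acc => acc * b + d) 0 l.

Lemma digits_le_cat l s : all (fun d => d < b) l -> 0 < s ->
  digits_le b (s * b ^ size l + vle l) = l ++ digits_le b s.
Proof.
elim: l => [|d l IH] /= hl hs; first by rewrite expn0 muln1 addn0.
move/andP: hl => [hd hl].
have -> : s * b ^ (size l).+1 + (vle l * b + d) = (s * b ^ size l + vle l) * b + d.
  by rewrite expnSr; lia.
rewrite digits_le_step //; first by rewrite IH.
have : 0 < b ^ size l by rewrite expn_gt0; lia.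
nia.
Qed.
End S.
Section T.
Variable b : nat.
Hypothesis hb : 2 <= b.

Lemma vle_cat l1 l2 : vle b (l1 ++ l2) = vle b l2 * b ^ size l1 + vle b l1.
Proof. elim: l1 => [|d l IH] /=; first by rewrite expn0 muln1 addn0.
rewrite IH expnS; lia. Qed.

Lemma fd_vle s : from_digits b s = vle b (rev s).
Proof.
elim/last_ind: s => [|s d IH] //.
by rewrite /from_digits foldl_rcons -/(from_digits b s) IH rev_rcons.
Qed.

Lemma fd_cat s1 s2 : from_digits b (s1 ++ s2) = from_digits b s1 * b ^ size s2 + from_digits b s2.
Proof. by rewrite !fd_vle rev_cat vle_cat size_rev. Qed.

Lemma vle_nseq k : vle b (nseq k 0) = 0.
Proof. by elim: k => //= k ->. Qed.

Lemma vle_lt l : all (fun d => d < b) l -> vle b l < b ^ size l.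
Proof.
elim: l => [|d l IH] /=; first by rewrite expn0.
move/andP=> [hd hl]; have := IH hl; rewrite expnS; nia.
Qed.

Lemma digsum_bound s : forall n, n < b ^ s -> digsum b n <= (b - 1) * s.
Proof.
elim: s => [|s IH] n hn.
  by have -> : n = 0 by rewrite expn0 in hn; lia.
case: (posnP n) => [->|np]; first by [].
rewrite /digsum digits_le_unfold //= -/(digsum b (n %/ b)).
have hq : n %/ b < b ^ s by rewrite ltn_divLR; [rewrite -expnSr | lia].
have := IH _ hq. have := ltn_pmod n (_ : 0 < b). lia.
Qed.

Lemma pow_big m : 5 <= m -> 2 * b * m.+1 <= b ^ m.
Proof.
elim: m => [|m IH] // hm.
case: (ltnP m 5) => h.
  have -> : m = 4 by lia.
  have : 2 ^ 4 <= b ^ 4 by rewrite leq_exp2r.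
  rewrite !expnS expn0 => h4. nia.
have := IH h. rewrite expnS. nia.
Qed.
End T.

Theorem corollary14 (b : nat) (I : seq nat) :
  2 <= b -> I != [::] -> all (fun d => d < b) I ->
  forall M : nat, exists N : nat, M < N /\ wMRH b N /\ infix I (digits b N).
Proof.
move=> hb hI hall M.
set L := size I. set t := M + 5. set k := L + t.
have hL : 0 < L by rewrite /L; move: hI; case: (I).
have hallr : all (fun d => d < b) (rev I) by rewrite all_rev.
set J := vle b (rev I). set R := vle b I.
have hJ : J < b ^ L by have := @vle_lt b hb (rev I) hallr; rewrite size_rev.
have hR : R < b ^ L by exact: vle_lt.
set X := b ^ k * b ^ L + J.
have d1 : digits_le b 1 = [:: 1].
  rewrite digits_le_unfold // modn_small // divn_small //.
have dk : digits_le b (b ^ k) = nseq k 0 ++ [:: 1].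
  have := @digits_le_cat b hb (nseq k 0) 1 _ _.
  rewrite vle_nseq size_nseq mul1n addn0 d1 => ->//.
  by elim: (k) => //= ? ->; lia.
have dX : digits_le b X = rev I ++ nseq k 0 ++ [:: 1].
  rewrite /X /J /L -dk -(size_rev I) (@digits_le_cat b hb) //.
  by rewrite expn_gt0; lia.
have hY : rev_num b X = R * b ^ k.+1 + 1.
  rewrite /rev_num /digits dX.
  have -> : rev (rev (rev I ++ nseq k 0 ++ [:: 1])) = rev I ++ nseq k 0 ++ [:: 1] by apply: revK.
  rewrite (@fd_cat b hb) (@fd_cat b hb) size_cat size_nseq /= addn1.
  rewrite fd_vle revK -/R; congr (_ + _).
  rewrite /from_digits /=. have -> : forall j, foldl (fun acc d => acc * b + d) 0 (nseq j 0) = 0.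
    by elim=> //= j; rewrite mul0n addn0.
  by [].
set D := b ^ L. set P := b ^ t.
have ek : b ^ k = D * P by rewrite /k expnD.
have eks : b ^ k.+1 = D * P * b by rewrite expnSr ek.
set s := J * R * P * b + R * D * D * P * P * b + D * P.
have hD : 0 < D by rewrite expn_gt0; lia.
have hP : 0 < P by rewrite expn_gt0; lia.
have hN : X * rev_num b X = s * b ^ size (rev I) + J.
  rewrite hY eks /X ek size_rev -/L -/D /s. lia.
have hs : 0 < s by rewrite /s addn_gt0 muln_gt0 hD hP orbT.
have dN : digits b (X * rev_num b X) = rev (digits_le b s) ++ I.
  by rewrite /digits hN digits_le_cat // rev_cat revK.
set m := L + L + t.
have em : b ^ m = D * D * P.
  by rewrite /m /D /P !expnD.
have hm5 : 5 <= m by rewrite /m /t; lia.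
have hbig := @pow_big b hb m hm5.
have hmlt := ltn_expl m hb.
set Y := rev_num b X.
have hYpos : 0 < Y by rewrite /Y hY; lia.
set Z := D * D * P * b.
have hXZ : X < Z.
  have e : X = D * D * P + J by rewrite /X ek; lia.
  rewrite e /Z.
  have h1 : D * D * P * b = D * D * P + D * D * P * (b - 1).
    rewrite -mulnS; congr (_ * _); lia.
  rewrite h1 ltn_add2l.
  apply: (leq_trans hJ); rewrite -/D.
  rewrite -{1}(muln1 D) -mulnA -mulnA leq_mul2l; apply/orP; right.
  by rewrite muln_gt0 muln_gt0 hD hP /=; lia.
have hYZ : Y <= Z.
  rewrite /Y hY eks /Z.
  have hR' : R.+1 <= D by [].
  have : R.+1 * (D * P * b) <= D * (D * P * b) by rewrite leq_mul2r hR' orbT.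
  have -> : D * D * P * b = D * (D * P * b) by rewrite !mulnA.
  have hW : 0 < D * P * b by rewrite !muln_gt0 hD hP /=; lia.
  move: hW; rewrite mulSn; move: (D * P * b) => W hW h.
  apply: leq_trans h; by rewrite addnC leq_add2r.
have hXY : X * Y < b ^ (m.+1 + m.+1).
  rewrite expnD expnSr em -/Z.
  apply: (@leq_ltn_trans (X * Z)); first by rewrite leq_mul2l hYZ orbT.
  by rewrite ltn_pmul2r // /Z !muln_gt0 hD hP /=; lia.
have hds := @digsum_bound b hb _ _ hXY.
have hXm : b ^ m <= X by rewrite /X ek em mulnAC leq_addr.
have hNX : X <= X * Y by rewrite leq_pmulr.
have hdX : digsum b (X * Y) <= X.
  apply: (leq_trans hds); apply: leq_trans hXm; apply: leq_trans hbig.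
  have -> : m.+1 + m.+1 = 2 * m.+1 by lia.
  rewrite mulnA [(b - 1) * 2]mulnC leq_mul2r; apply/orP; right.
  by rewrite leq_mul2l leq_subr orbT.
exists (X * Y); split; last split.
- have : M < m by rewrite /m /t; lia.
  move=> h; apply: (leq_trans h); apply: leq_trans hNX; exact: leq_trans (ltnW hmlt) hXm.
- split; first by rewrite muln_gt0 hYpos andbT; apply: leq_trans hXm; rewrite expn_gt0; lia.
  exists (X - digsum b (X * Y)).
  by rewrite subnK.
- by rewrite dN suffix_infix.
Qed.
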